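(* Let $\beta>0$ and let $Y_i:\mathbb{R}^+\to\mathbb{R}^{m\times(mn+2)}$, $i=1,\dots,n$, be the agents' regressors, and let $Y_{F_i}$ be the solution of $\dot Y_{F_i}=-\beta Y_{F_i}+Y_i$, $Y_{F_i}(0)=0$. If the set $\{Y_1,\dots,Y_n\}$ is collectively initially exciting, then the set $\{Y_{F_1},\dots,Y_{F_n}\}$ is collectively initially exciting.
   Context: The regressors are $Y_i(t)=\big[\ddot q_i,\; k(t)\dot q_i,\; \tfrac12 k(t)[Q_{i1}(t)I_m,\dots,Q_{in}(t)I_m]\big]$, where $q_i(t)\in\mathbb{R}^m$ are agent positions, $k(t)>0$ is a bounded gain, and $Q_{ij}(t)$ are entries of the signless Laplacian $\mathcal D(t)+\mathcal A(t)$ of the time-varying interaction graph. A set of bounded, locally integrable signals $\phi_i:\mathbb{R}^+\to\mathbb{R}^{u\times v}$, $i=1,\dots,n$, is collectively initially exciting (C-IE) if there exist constants $\bar T>0$, $\gamma>0$ such that $\int_{t_0}^{t_0+\bar T}\sum_{i=1}^n\phi_i^\top(\tau)\phi_i(\tau)\,d\tau\ge\gamma I_v$ for some $t_0\ge0$. *)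

(* Defs.v *)
From HB Require Import structures.
From mathcomp Require Import all_boot all_order all_algebra.
From mathcomp Require Import all_classical all_reals all_analysis.
Set Implicit Arguments. Unset Strict Implicit. Unset Printing Implicit Defensive.
Import Order.TTheory GRing.Theory Num.Theory.
Import numFieldNormedType.Exports.
Local Open Scope classical_set_scope.
Local Open Scope ring_scope.

Section Defs.
Variable R : realType.
Local Notation mu := (@lebesgue_measure R).

(* Signals are functions on R; only their restriction to R^+ = [0, +oo) matters. *)

(* bounded on R^+ (entrywise, equivalent to any matrix norm) *)
Definition bounded_sig (u v : nat) (phi : R -> 'M[R]_(u, v)) : Prop :=
  exists M : R, forall t, 0 <= t -> forall j k, `|phi t j k| <= M.

Definition loc_integrable (u v : nat) (phi : R -> 'M[R]_(u, v)) : Prop :=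
  forall a b : R, 0 <= a -> forall j k,
    mu.-integrable `[a, b] (fun t => (phi t j k)%:E).

Definition mx_integral (u v : nat) (a b : R) (phi : R -> 'M[R]_(u, v))
  : 'M[R]_(u, v) :=
  \matrix_(j, k) (\int[mu]_(t in `[a, b]) phi t j k).

Definition loewner_ge (v : nat) (A B : 'M[R]_v) : Prop :=
  forall x : 'cV[R]_v, 0 <= (x^T *m (A - B) *m x) 0 0.

Definition CIE (u v n : nat) (phi : 'I_n -> R -> 'M[R]_(u, v)) : Prop :=
  (forall i, bounded_sig (phi i)) /\ (forall i, loc_integrable (phi i)) /\
  exists (Tbar gamma t0 : R), 0 < Tbar /\ 0 < gamma /\ 0 <= t0 /\
    loewner_ge
      (mx_integral t0 (t0 + Tbar)
         (fun tau => \sum_(i < n) (phi i tau)^T *m phi i tau))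
      (gamma%:M).

(* YF is the (Caratheodory) solution on R^+ of  dYF/dt = -beta YF + Y,
   YF(0) = 0, i.e. YF is locally integrable, YF(0)=0 and
   YF(t) = int_0^t (-beta YF(s) + Y(s)) ds  for all t >= 0. *)
Definition filtered (u v : nat) (beta : R) (Y YF : R -> 'M[R]_(u, v)) : Prop :=
  loc_integrable YF /\ YF 0 = 0 /\
  forall t, 0 <= t -> YF t = mx_integral 0 t (fun s => - beta *: YF s + Y s).

End Defs.

(* Main.v *)
Require Import Defs.
From HB Require Import structures.
From mathcomp Require Import all_boot all_order all_algebra.
From mathcomp Require Import all_classical all_reals all_analysis.
From mathcomp Require Import measurable_realfun lebesgue_integral_differentiation.
From mathcomp Require Import ring lra.
Import Order.TTheory GRing.Theory Num.Theory.
Local Open Scope ring_scope.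
Import numFieldNormedType.Exports.

Module Aux.
Set Implicit Arguments. Unset Strict Implicit. Unset Printing Implicit Defensive.
Local Open Scope classical_set_scope.
Local Open Scope ring_scope.

Section Helpers.
Context {R : realType}.
Local Notation mu := (@lebesgue_measure R).

Lemma pint_delta (w : R -> R) (a b t e : R) : a <= b ->
  mu.-integrable `[a, b] (EFin \o w) -> a <= t <= b -> 0 < e ->
  exists2 d, 0 < d & forall s, a <= s <= b -> `|s - t| < d ->
   `|\int[mu]_(x in `[a, s]) w x - \int[mu]_(x in `[a, t]) w x| < e.
Proof.
move=> ab hw tab e0.
have C := parameterized_integral_continuous ab hw.
have := (subspace_continuousP _ _).1 C t.
rewrite /= in_itv/= tab => /(_ isT).
move/cvgrPdist_lt => /(_ e e0).
rewrite /within; case/nbhs_ballP => d /= d0 hd.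
exists d => // s sab st.
rewrite distrC; apply: (hd s) => /=.
  by rewrite /ball/= distrC.
by rewrite in_itv/= sab.
Qed.
Definition bm (D : set R) (f : R -> R) :=
  measurable_fun D f /\ exists M, forall x, D x -> `|f x| <= M.

Lemma bm_int (a b : R) f : bm `[a, b] f -> mu.-integrable `[a, b] (EFin \o f).
Proof.
move=> [mf [M hM]]; apply: measurable_bounded_integrable => //.
  have := lebesgue_measure_itv `[a, b]; rewrite /= => ->.
  by case: ifP => // _; rewrite -EFinD ltry.
rewrite /bounded_near; near=> M'; move=> x /= Dx; rewrite (le_trans (hM x Dx))//.

Unshelve. all: by end_near. Qed.

Lemma bm_cst D (c : R) : bm D (fun=> c).
Proof. by split; [exact: measurable_cst| exists `|c|]. Qed.

Lemma bmD D f g : measurable D -> bm D f -> bm D g -> bm D (fun x => f x + g x).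
Proof.
move=> mD [mf [M hM]] [mg [N hN]]; split; first exact: measurable_funD.
exists (M + N) => x Dx; rewrite (le_trans (ler_normD _ _))//.
by rewrite lerD// ?hM ?hN.
Qed.

Lemma bmM D f g : measurable D -> bm D f -> bm D g -> bm D (fun x => f x * g x).
Proof.
move=> mD [mf [M hM]] [mg [N hN]]; split; first exact: measurable_funM.
exists (M * N) => x Dx; rewrite normrM ler_pM//.
  by rewrite hM.
by rewrite hN.
Qed.

Lemma bm_sum D I (s : seq I) (F : I -> R -> R) : measurable D ->
  (forall i, bm D (F i)) -> bm D (fun x => \sum_(i <- s) F i x).
Proof.
move=> mD hF; elim: s => [|i s ih].
  by under eq_fun do rewrite big_nil; exact: bm_cst.
under eq_fun do rewrite big_cons; exact: bmD.
Qed.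

Lemma intD D f g : measurable D -> mu.-integrable D (EFin \o f) -> mu.-integrable D (EFin \o g) ->
  mu.-integrable D (EFin \o (fun x => f x + g x)).
Proof.
move=> mD hf hg; have h := integrableD mD hf hg.
by apply: eq_integrable h => // x _ /=; rewrite EFinD.
Qed.

Lemma intZ D (k : R) f : measurable D -> mu.-integrable D (EFin \o f) ->
  mu.-integrable D (EFin \o (fun x => k * f x)).
Proof.
move=> mD hf; have h := integrableZl mD k hf.
by apply: eq_integrable h => // x _ /=; rewrite EFinM.
Qed.


Lemma Rint_le0 (D : set R) (h : R -> R) : measurable D ->
  mu.-integrable D (EFin \o h) -> (forall x, D x -> h x <= 0) ->
  \int[mu]_(x in D) h x <= 0.
Proof.
move=> mD hh hle.
have i0 : mu.-integrable D (EFin \o (fun=> (0:R))).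
  by apply: eq_integrable (integrable0 mu D) => // x _.
have := @le_Rintegral _ _ _ mu D h (fun=> 0) mD hh i0 hle.
by rewrite Rintegral_cst// mul0r.
Qed.

Lemma bound_up (f g : R -> R) (beta M t1 : R) : 0 < beta -> 0 <= M ->
  (forall t, 0 <= t -> g t <= M) ->
  (forall S, 0 <= S -> mu.-integrable `[0, S] (EFin \o f)) ->
  (forall S, 0 <= S -> mu.-integrable `[0, S] (EFin \o g)) ->
  (forall t, 0 <= t -> f t = \int[mu]_(s in `[0, t]) (- beta * f s + g s)) ->
  0 <= t1 -> f t1 <= M / beta.
Proof.
move=> b0 M0 gM hf hg feq t10.
set K := M / beta.
have K0 : 0 <= K by rewrite divr_ge0// ltW.
have bK : beta * K = M by rewrite /K mulrC divfK// gt_eqF.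
have f0 : f 0 = 0 by rewrite feq// set_itv1 Rintegral_set1.
set h := fun s => - beta * f s + g s.
have hint S : 0 <= S -> mu.-integrable `[0, S] (EFin \o h).
  by move=> S0; apply: intD => //; [apply: intZ => //; exact: hf| exact: hg].
rewrite leNgt; apply/negP => ft1.
set E := [set u | (0 <= u <= t1) /\ f u <= K].
have E0 : E 0 by split; [rewrite lexx t10| rewrite f0].
have Eub : ubound E t1 by move=> u [/andP[]].
have hsE : has_sup E by split; [exists 0 | exists t1].
set s := sup E.
have s0 : 0 <= s by exact: sup_upper_bound.
have st1 : s <= t1 by apply: ge_sup => //; exists 0.
have fs : f s <= K.
  rewrite leNgt; apply/negP => fsK.
  have [d d0 hd] := @pint_delta h 0 t1 s (f s - K) t10 (hint _ t10)
    (ltac:(by rewrite s0 st1)) (ltac:(by rewrite subr_gt0)).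
  have ub : ubound E (s - d / 2).
    move=> u [/andP[u0 ut1] fu]; rewrite leNgt; apply/negP => du.
    have := hd u (ltac:(by rewrite u0 ut1)).
    rewrite /h -feq// -feq//.
    have us : u <= s by apply: (sup_upper_bound hsE); split => //; rewrite u0 ut1.
    have -> : `|u - s| < d.
      rewrite ler0_norm ?subr_le0// opprB.
      rewrite ltrBlDr -ltrBlDl (lt_le_trans _ (ltW du))//.
      by rewrite ltrD2l ltrN2 gtr_pMr// invf_lt1// ltr1n.
    move=> /(_ isT); rewrite distrC => h1.
    have := le_lt_trans (ler_norm _) h1.
    move: fu; lra.
  have := ge_sup (ex_intro _ 0 E0) ub.
  have hd2 : 0 < d / 2 by rewrite divr_gt0.
  rewrite -/s; lra.
have gt u : s < u <= t1 -> K < f u.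
  move=> /andP[su ut1]; rewrite ltNge; apply/negP => fu.
  have : u <= s by apply: sup_upper_bound => //; split => //; rewrite ut1 andbT ltW// (le_lt_trans s0 su).
  by rewrite leNgt su.
have st : s < t1 by rewrite lt_neqAle st1 andbT; apply/eqP => est; move: ft1; rewrite -est ltNge fs.
have := @Rintegral_itvB R h (BLeft 0) (BRight t1) s (hint _ t10).
rewrite !bnd_simp s0 st1 => /(_ isT isT).
rewrite -feq// -feq// => eq1.
have : \int[mu]_(x in [set` Interval (BRight s) (BRight t1)]) h x <= 0.
  apply: Rint_le0 => //.
    apply: integrableS (hint _ t10) => //; apply: subset_itvr.
    by rewrite bnd_simp.
  move=> u /=; rewrite in_itv/= => /andP[su ut1].
  rewrite /h; have := gt u (ltac:(by rewrite su ut1)).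
  have := gM u (ltac:(by rewrite ltW// (le_lt_trans s0 su))).
  move=> gu fu; have : beta * K < beta * f u by rewrite ltr_pM2l.
  lra.
rewrite -eq1 subr_le0 => ft1s.
by move: (le_trans ft1s fs); rewrite leNgt ft1.
Qed.
End Helpers.
Section PD.
Context {R : realType}.

Definition qf v (Q : 'M[R]_v) (x y : 'cV[R]_v) := (x^T *m Q *m y) 0 0.

Lemma qf_lin v (Q : 'M[R]_v) x y (t : R) :
  qf Q (x + t *: y) (x + t *: y) =
  qf Q x x + t * (qf Q x y + qf Q y x) + t ^+ 2 * qf Q y y.
Proof.
rewrite /qf [(x + _)^T]linearD /= [(t *: y)^T]linearZ /= !mulmxDl !mulmxDr.
rewrite -!scalemxAl -!scalemxAr !mxE.
ring.
Qed.

Lemma qf_sym v (Q : 'M[R]_v) x y : Q^T = Q -> qf Q y x = qf Q x y.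
Proof.
move=> QT; rewrite /qf.
have -> : (y^T *m Q *m x) 0 0 = ((y^T *m Q *m x)^T) 0 0 by rewrite [in RHS]mxE.
by rewrite !trmx_mul trmxK QT mulmxA.
Qed.

Lemma qf_expand v (Q : 'M[R]_v) x y :
  qf Q x y = \sum_j \sum_k x j 0 * Q j k * y k 0.
Proof.
rewrite /qf mxE exchange_big /=; apply: eq_bigr => k _.
rewrite mxE big_distrl /=; apply: eq_bigr => j _.
by rewrite mxE.
Qed.

Lemma nrm2E v (x : 'cV[R]_v) : (x^T *m x) 0 0 = \sum_j x j 0 ^+ 2.
Proof. by rewrite mxE; apply: eq_bigr => j _; rewrite mxE expr2. Qed.

Lemma nrm2_ge0 v (x : 'cV[R]_v) : 0 <= (x^T *m x) 0 0.
Proof. by rewrite nrm2E sumr_ge0// => j _; rewrite sqr_ge0. Qed.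

Lemma nrm2_eq0 v (x : 'cV[R]_v) : (x^T *m x) 0 0 = 0 -> x = 0.
Proof.
rewrite nrm2E => /eqP; rewrite psumr_eq0; last by move=> j _; rewrite sqr_ge0.
move=> /allP h; apply/matrixP => j k; rewrite ord1 mxE.
by have /(_ (mem_index_enum j))/implyP/(_ isT) := h j; rewrite sqrf_eq0 => /eqP.
Qed.

Lemma coord_le v (x : 'cV[R]_v) j : x j 0 ^+ 2 <= (x^T *m x) 0 0.
Proof.
rewrite nrm2E (bigD1 j)//= lerDl sumr_ge0// => i _; exact: sqr_ge0.
Qed.

Lemma pd_uniform v (Q : 'M[R]_v) : Q^T = Q -> (forall x, 0 <= qf Q x x) ->
  (forall x, qf Q x x = 0 -> x = 0) ->
  exists2 g, 0 < g & forall x, g * (x^T *m x) 0 0 <= qf Q x x.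
Proof.
move=> QT Qpsd Qdef.
have uQ : Q \in unitmx.
  rewrite unitmxE unitfE; apply/negP => /det0P [w w0 wQ].
  have : qf Q w^T w^T = 0 by rewrite /qf trmxK wQ mul0mx mxE.
  move/Qdef => /(congr1 trmx); rewrite trmxK linear0 => w0'.
  by move: w0; rewrite w0' eqxx.
set P := invmx Q.
have PT : P^T = P by rewrite /P trmx_inv QT.
set C := \sum_j \sum_k `|P j k|.
have C0 : 0 <= C by rewrite sumr_ge0// => j _; rewrite sumr_ge0.
exists (1 / (C + 1)); first by rewrite divr_gt0// ltr_pwDr.
move=> x; set n2 := (x^T *m x) 0 0.
have n20 : 0 <= n2 := nrm2_ge0 x.
have [n2e|n2p] := eqVneq n2 0.
  by rewrite n2e mulr0 Qpsd.
have n2gt : 0 < n2 by rewrite lt_neqAle eq_sym n2p n20.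
set y := P *m x.
have Qy : Q *m y = x by rewrite /y /P mulKVmx.
have Bxy : qf Q x y = n2 by rewrite /qf -mulmxA Qy.
have Byy : qf Q y y = qf P x x.
  by rewrite /qf {2}/y trmx_mul PT -!mulmxA Qy.
have Pb : qf P x x <= C * n2.
  rewrite qf_expand /C mulr_suml; apply: ler_sum => j _.
  rewrite mulr_suml; apply: ler_sum => k _.
  have hj := coord_le x j; have hk := coord_le x k.
  have : `|x j 0 * x k 0| <= n2.
    rewrite normrM; have := sqr_ge0 (`|x j 0| - `|x k 0|).
    rewrite -(real_normK (num_real (x j 0))) in hj.
    rewrite -(real_normK (num_real (x k 0))) in hk.
    rewrite -/n2 in hj hk; nra.
  move=> hjk; rewrite (le_trans (ler_norm _))// mulrAC normrM mulrC.
  by rewrite ler_wpM2l// normrM mulrC.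
have Byy0 : 0 < qf Q y y.
  rewrite lt_neqAle Qpsd andbT eq_sym; apply/negP => /eqP /Qdef y0.
  by move: n2p; rewrite /n2 -Qy y0 !mulmx0 mxE eqxx.
set t := - qf Q x y / qf Q y y.
have := Qpsd (x + t *: y); rewrite qf_lin (@qf_sym _ Q x y QT).
have tB : t * qf Q y y = - qf Q x y by rewrite /t divfK// gt_eqF.
have Bxx0 := Qpsd x.
move=> h.
have cs : qf Q x y ^+ 2 <= qf Q x x * qf Q y y.
  have h' := mulr_ge0 h (ltW Byy0).
  have e : (qf Q x x + t * (qf Q x y + qf Q x y) + t ^+ 2 * qf Q y y) * qf Q y y
    = qf Q x x * qf Q y y + 2 * qf Q x y * (t * qf Q y y) + (t * qf Q y y) ^+ 2.
    by ring.
  rewrite e tB in h'; nra.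
rewrite Bxy Byy in cs.
have : n2 <= qf Q x x * C.
  have : n2 * n2 <= n2 * (qf Q x x * C) by nra.
  by rewrite ler_pM2l.
move=> h2; rewrite mul1r ler_pdivrMl ?ltr_pwDr//; nra.
Qed.
End PD.

Section AE.
Context {R : realType}.
Local Notation mu := (@lebesgue_measure R).

Lemma ae_neq (a : R) : {ae mu, forall x, x != a}.
Proof.
exists [set a]; split => //; first exact: lebesgue_measure_set1.
by move=> x /= /negP; rewrite negbK => /eqP.
Qed.

Lemma cont_ae_zero (w : R -> R) (S t : R) : 0 < S ->
  mu.-integrable `[0, S] (EFin \o w) ->
  {ae mu, forall x, `[0, S]%classic x -> \int[mu]_(s in `[0, x]) w s = 0} ->
  0 <= t <= S -> \int[mu]_(s in `[0, t]) w s = 0.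
Proof.
move=> S0 hw [N [mN N0 hN]] tS.
apply/eqP/negP => /negP Ft.
have e0 : 0 < `|\int[mu]_(s in `[0, t]) w s| by rewrite normr_gt0.
have [d d0 hd] := pint_delta (ltW S0) hw tS e0.
have [r [r0 rd rS]] : exists r, [/\ 0 < r, r <= d / 2 & r <= S / 2].
  exists (Num.min (d / 2) (S / 2)); split.
  - by rewrite lt_min !divr_gt0.
  - by rewrite ge_min lexx.
  - by rewrite ge_min lexx orbT.
have d20 : 0 < d / 2 by rewrite divr_gt0.
have [c [c0 cS ct]] : exists c, [/\ 0 <= c, c + r <= S &
    (forall u, c <= u <= c + r -> `|u - t| < d)].
  move/andP: tS => [t0 tS].
  case: (leP (t + r) S) => h.
  - exists t; split => // u /andP[tu ur]; rewrite ltr_norml; apply/andP; split; lra.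
  - exists (t - r); split; [lra|lra|] => u /andP[tu ur].
    rewrite ltr_norml; apply/andP; split; lra.
have sub : `[c, c + r] `<=` N.
  move=> u /=; rewrite in_itv/= => /andP[cu ur]; apply: hN => /= hu.
  have uS : 0 <= u <= S by apply/andP; split; lra.
  have := hd u uS (ct u (ltac:(by rewrite cu ur))).
  by rewrite hu ?sub0r ?normrN ?ltxx// in_itv/=.
have := @le_measure _ _ _ mu _ _ (mem_set (measurable_itv `[c, c + r])) (mem_set mN) sub.
have N0' : (mu N <= 0)%E by rewrite le_eqVlt; apply/orP; left; apply/eqP; exact: N0.
move/le_trans => /(_ _ N0').
have := lebesgue_measure_itv `[c, c + r]; rewrite /= => ->.
rewrite lte_fin ltrDl r0 -EFinD lee_fin; lra.
Qed.


Lemma ae_zero_of_int (w : R -> R) (S : R) : 0 < S ->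
  mu.-integrable `[0, S] (EFin \o w) ->
  (forall t, 0 <= t <= S -> \int[mu]_(s in `[0, t]) w s = 0) ->
  {ae mu, forall x, `[0, S]%classic x -> w x = 0}.
Proof.
move=> S0 hw hF.
pose g := w \_ `[0, S].
have lg : locally_integrable [set: R] g.
  exact: integrable_locally (measurable_itv _) hw.
have hg : mu.-integrable [set` Interval (BLeft 0) (BRight S)] (EFin \o g).
  apply: eq_integrable hw => // x xS /=.
  by rewrite /g patchE xS.
apply: (@filterS3 _ (almost_everywhere mu) (ae_filter_ringOfSetsType mu) _ _ _ _ _ (ae_neq 0) (ae_neq S) (lebesgue_differentiation lg)).
move=> x x0 xS lx /=; rewrite in_itv/= => /andP[x0' xS'].
have x0'' : 0 < x by rewrite lt_neqAle eq_sym x0 x0'.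
have xS'' : x < S by rewrite lt_neqAle xS xS'.
have := @FTC1_lebesgue_pt R g (BLeft 0) x S xS'' hg.
move=> /(_ ltac:(first [by rewrite bnd_simp | by [] | by rewrite /= bnd_simp | (rewrite /Order.lt/=; by [])])) /(_ lx) [_ dF].
have gx : g x = w x by rewrite /g patchE mem_set//= in_itv/= x0' xS'.
rewrite -gx -dF derive1E.
rewrite (@near_eq_derive _ _ _ _ (cst 0)); first by rewrite derive_cst.
have := @near_in_itvoo R 0 S x (ltac:(by rewrite in_itv/= x0'' xS'')).
apply: filterS => y; rewrite in_itv/= => /andP[y0 yS].
rewrite /=; transitivity (\int[mu]_(s in `[0, y]) w s); last first.
  by apply: hF; rewrite !ltW.
apply: eq_Rintegral => u; rewrite inE/= in_itv/= => /andP[u0 uy].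
by rewrite /g patchE mem_set//= in_itv/= u0 (le_trans uy (ltW yS)).
Qed.

End AE.

Section Lin.
Context {R : realType}.
Local Notation mu := (@lebesgue_measure R).

Lemma int_sum D I (s : seq I) (F : I -> R -> R) : measurable D ->
  (forall i, mu.-integrable D (EFin \o F i)) ->
  mu.-integrable D (EFin \o (fun x => \sum_(i <- s) F i x)).
Proof.
move=> mD hF; elim: s => [|i s ih].
  apply: eq_integrable (integrable0 mu D) => // x _ /=.
  by rewrite big_nil.
apply: eq_integrable (intD mD (hF i) ih) => // x _ /=.
by rewrite big_cons.
Qed.

Lemma Rint_sum D I (s : seq I) (F : I -> R -> R) : measurable D ->
  (forall i, mu.-integrable D (EFin \o F i)) ->
  \int[mu]_(x in D) (\sum_(i <- s) F i x) = \sum_(i <- s) \int[mu]_(x in D) F i x.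
Proof.
move=> mD hF; elim: s => [|i s ih].
  under eq_Rintegral do rewrite big_nil.
  by rewrite Rintegral_cst// mul0r big_nil.
under eq_Rintegral do rewrite big_cons.
by rewrite RintegralD// ?ih ?big_cons//; exact: int_sum.
Qed.

Lemma qf_expand2 v (Q : 'M[R]_v) x y :
  qf Q x y = \sum_j \sum_k (x j 0 * y k 0) * Q j k.
Proof.
rewrite qf_expand; apply: eq_bigr => j _; apply: eq_bigr => k _; ring.
Qed.

Lemma quad_int v (G : R -> 'M[R]_v) (a b : R) (x : 'cV[R]_v) :
  (forall j k, mu.-integrable `[a, b] (EFin \o (fun t => G t j k))) ->
  qf (mx_integral a b G) x x = \int[mu]_(t in `[a, b]) qf (G t) x x.
Proof.
move=> hG.
under eq_Rintegral do rewrite qf_expand2.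
rewrite qf_expand2 Rint_sum//; last first.
  by move=> j; apply: int_sum => // k; apply: intZ.
apply: eq_bigr => j _.
rewrite Rint_sum//; last by move=> k; apply: intZ.
apply: eq_bigr => k _.
by rewrite mxE RintegralZl.
Qed.

Lemma qf_sumsq v m n (A : 'I_n -> 'M[R]_(m, v)) (x : 'cV[R]_v) :
  qf (\sum_(i < n) (A i)^T *m A i) x x = \sum_(i < n) \sum_(r < m) ((A i *m x) r 0) ^+ 2.
Proof.
rewrite /qf mulmx_sumr mulmx_suml summxE; apply: eq_bigr => i _.
by rewrite mulmxA -mulmxA -trmx_mul nrm2E.
Qed.

End Lin.

Section More.
Context {R : realType}.
Local Notation mu := (@lebesgue_measure R).

Lemma bound_abs (f g : R -> R) (beta M t : R) : 0 < beta ->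
  (forall t, 0 <= t -> `|g t| <= M) ->
  (forall S, 0 <= S -> mu.-integrable `[0, S] (EFin \o f)) ->
  (forall S, 0 <= S -> mu.-integrable `[0, S] (EFin \o g)) ->
  (forall t, 0 <= t -> f t = \int[mu]_(s in `[0, t]) (- beta * f s + g s)) ->
  0 <= t -> `|f t| <= M / beta.
Proof.
move=> b0 gM hf hg feq t0.
have M0 : 0 <= M by apply: le_trans (gM 0 (lexx 0)).
rewrite ler_norml; apply/andP; split; last first.
  apply: (@bound_up _ f g) => // u u0.
  exact: le_trans (ler_norm _) (gM u u0).
rewrite lerNl.
apply: (@bound_up _ (fun t => - f t) (fun t => - g t)) => //.
- by move=> u u0; rewrite (le_trans _ (gM u u0))// -normrN ler_norm.
- move=> S S0; apply: eq_integrable (intZ (-1) _ (hf S S0)) => // x _ /=.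
  by rewrite mulN1r.
- move=> S S0; apply: eq_integrable (intZ (-1) _ (hg S S0)) => // x _ /=.
  by rewrite mulN1r.
- move=> u u0; rewrite feq//.
  have hi : mu.-integrable `[0, u] (EFin \o (fun s => - beta * f s + g s)).
    by apply: intD => //; [apply: intZ => //; exact: hf|exact: hg].
  rewrite -mulN1r -RintegralZl//; apply: eq_Rintegral => s _; ring.
Qed.

Lemma bm_of (f : R -> R) (a b M : R) : 0 <= a ->
  mu.-integrable `[a, b] (EFin \o f) -> (forall t, 0 <= t -> `|f t| <= M) ->
  bm `[a, b] f.
Proof.
move=> a0 hf hM; split.
  by case/integrableP: hf => /measurable_EFinP.
by exists M => t /=; rewrite in_itv/= => /andP[ta _]; apply: hM; exact: le_trans ta.
Qed.

Lemma gram_entry v m n (A : 'I_n -> 'M[R]_(m, v)) j k :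
  (\sum_(i < n) (A i)^T *m A i) j k = \sum_(i < n) \sum_(r < m) A i r j * A i r k.
Proof.
rewrite summxE; apply: eq_bigr => i _; rewrite mxE; apply: eq_bigr => r _.
by rewrite mxE.
Qed.

Lemma gram_entry_bm v m n (A : 'I_n -> R -> 'M[R]_(m, v)) (a b : R) :
  (forall i r j, bm `[a, b] (fun t => A i t r j)) ->
  forall j k, bm `[a, b] (fun t => (\sum_(i < n) (A i t)^T *m A i t) j k).
Proof.
move=> hA j k.
have -> : (fun t => (\sum_(i < n) (A i t)^T *m A i t) j k) =
   (fun t => \sum_(i < n) \sum_(r < m) A i t r j * A i t r k).
  by apply/funext => t; rewrite gram_entry.
apply: bm_sum => // i; apply: bm_sum => // r; exact: bmM.
Qed.

Lemma gram_sym v m n (A : 'I_n -> 'M[R]_(m, v)) :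
  (\sum_(i < n) (A i)^T *m A i)^T = \sum_(i < n) (A i)^T *m A i.
Proof.
apply/matrixP => j k; rewrite mxE !gram_entry; apply: eq_bigr => i _.
by apply: eq_bigr => r _; rewrite mulrC.
Qed.

Lemma ae_zero_of_Rint0 (h : R -> R) (D : set R) : measurable D ->
  mu.-integrable D (EFin \o h) -> (forall x, D x -> 0 <= h x) ->
  \int[mu]_(x in D) h x = 0 -> {ae mu, forall x, D x -> h x = 0}.
Proof.
move=> mD hi h0 hR.
have fin := @integrable_fin_num _ _ _ mu D mD _ hi.
have e0 : (\int[mu]_(x in D) (EFin \o h) x = 0)%E.
  by rewrite -(fineK fin); move: hR; rewrite /Rintegral => ->.
have : (\int[mu]_(x in D) `|(EFin \o h) x| = 0)%E.
  rewrite -e0; apply: eq_integral => x /[!inE] Dx /=.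
  by rewrite ger0_norm// h0.
move/(ae_eq_integral_abs mu mD (measurable_int mu hi)).
by apply: filterS => x /= + Dx => /(_ Dx) [].
Qed.

Lemma Rint_ae0 (h : R -> R) (D : set R) : measurable D ->
  measurable_fun D h -> {ae mu, forall x, D x -> h x = 0} ->
  \int[mu]_(x in D) h x = 0.
Proof.
move=> mD mh hae; rewrite /Rintegral.
rewrite (@ae_eq_integral _ _ _ mu D (cst 0%E) (EFin \o h))//.
- by rewrite integral0.
- exact/measurable_EFinP.
- apply: (@filterS _ (almost_everywhere mu) (ae_filter_ringOfSetsType mu) _ _ _ hae).
  by move=> x /= + Dx => /(_ Dx) ->.
Qed.

Lemma loew_qf v (A : 'M[R]_v) (g : R) x :
  (x^T *m (A - g%:M) *m x) 0 0 = qf A x x - g * (x^T *m x) 0 0.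
Proof.
by rewrite mulmxBr mulmxBl mul_mx_scalar -scalemxAl /qf !mxE.
Qed.

End More.

Section More2.
Context {R : realType}.
Local Notation mu := (@lebesgue_measure R).

Lemma aeS (P Q : R -> Prop) : (forall x, P x -> Q x) ->
  {ae mu, forall x, P x} -> {ae mu, forall x, Q x}.
Proof.
move=> PQ h.
exact: (@filterS _ (almost_everywhere mu) (ae_filter_ringOfSetsType mu) _ _ PQ h).
Qed.

Lemma bm_qf v (M : R -> 'M[R]_v) (D : set R) (x : 'cV[R]_v) : measurable D ->
  (forall j k, bm D (fun t => M t j k)) -> bm D (fun t => qf (M t) x x).
Proof.
move=> mD hM.
have -> : (fun t => qf (M t) x x) =
    (fun t => \sum_j \sum_k (x j 0 * x k 0) * M t j k).
  by apply/funext => t; rewrite qf_expand2.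
apply: bm_sum => // j; apply: bm_sum => // k; apply: bmM => //; exact: bm_cst.
Qed.

Lemma bm_mulx u v (A : R -> 'M[R]_(u, v)) (D : set R) (x : 'cV[R]_v) r :
  measurable D -> (forall j k, bm D (fun t => A t j k)) ->
  bm D (fun t => (A t *m x) r 0).
Proof.
move=> mD hA.
have -> : (fun t => (A t *m x) r 0) = (fun t => \sum_k A t r k * x k 0).
  by apply/funext => t; rewrite mxE.
apply: bm_sum => // k; apply: bmM => //; exact: bm_cst.
Qed.

End More2.

End Aux.
Import Aux.
Unset Implicit Arguments.

Theorem proposition6 (R : realType) (m n : nat) (beta : R)
  (Y YF : 'I_n -> R -> 'M[R]_(m, m * n + 2)) :
  0 < beta ->
  (forall i, filtered beta (Y i) (YF i)) ->
  CIE Y -> CIE YF.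
Proof.
move=> b0 hfil [hYb [hYi [Tb [gam [t0 [Tb0 [gam0 [t00 hexc]]]]]]]].
set S := t0 + Tb.
have S0 : 0 < S by rewrite /S; lra.
have Yint i j k a b : 0 <= a ->
    (@lebesgue_measure R).-integrable `[a, b] (EFin \o (fun t => Y i t j k)).
  by move=> a0; exact: (hYi i a b a0 j k).
have Fint i j k a b : 0 <= a ->
    (@lebesgue_measure R).-integrable `[a, b] (EFin \o (fun t => YF i t j k)).
  by move=> a0; exact: ((hfil i).1 a b a0 j k).
have Feq i j k t : 0 <= t -> YF i t j k =
    \int[@lebesgue_measure R]_(s in `[0, t]) (- beta * YF i s j k + Y i s j k).
  move=> t0'; have [_ [_ h]] := hfil i; rewrite (h t t0') mxE.
  by apply: eq_Rintegral => s _; rewrite !mxE.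
have MF i : exists M, forall t, 0 <= t -> forall j k, `|YF i t j k| <= M.
  have [M hM] := hYb i; exists (M / beta) => t t0' j k.
  apply: (@bound_abs _ (fun t => YF i t j k) (fun t => Y i t j k)) => //.
  - by move=> u u0; exact: hM.
  - by move=> S' S0'; exact: Fint.
  - by move=> S' S0'; exact: Yint.
  - by move=> u u0; exact: Feq.
have bmY i r j a b : 0 <= a -> bm `[a, b] (fun t => Y i t r j).
  move=> a0; have [M hM] := hYb i.
  by apply: (bm_of a0 (Yint i r j a b a0)) => t t0'; exact: hM.
have bmF i r j a b : 0 <= a -> bm `[a, b] (fun t => YF i t r j).
  move=> a0; have [M hM] := MF i.
  by apply: (bm_of a0 (Fint i r j a b a0)) => t t0'; exact: hM.
split; first by move=> i; exact: MF.
split; first by move=> i; exact: (hfil i).1.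
pose G := fun tau => \sum_(i < n) (YF i tau)^T *m YF i tau.
pose GY := fun tau => \sum_(i < n) (Y i tau)^T *m Y i tau.
pose Q := mx_integral 0 S G.
have bG j k : bm `[0, S] (fun t => G t j k).
  exact: (gram_entry_bm (fun i r j => bmF i r j 0 S (lexx 0))).
have bGY j k : bm `[t0, S] (fun t => GY t j k).
  exact: (gram_entry_bm (fun i r j => bmY i r j t0 S t00)).
have QT : Q^T = Q.
  apply/matrixP => j k; rewrite !mxE; apply: eq_Rintegral => t _.
  have := gram_sym (fun i => YF i t); move/matrixP/(_ j k); rewrite mxE => ->.
  by [].
have Qpsd x : 0 <= qf Q x x.
  rewrite quad_int; last by move=> j k; apply: bm_int.
  apply: Rintegral_ge0 => t _; rewrite /G qf_sumsq.
  by apply: sumr_ge0 => i _; apply: sumr_ge0 => r _; exact: sqr_ge0.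
have Qdef x : qf Q x x = 0 -> x = 0.
  move=> hq; rewrite quad_int in hq; last by move=> j k; apply: bm_int.
  have bq : bm `[0, S] (fun t => qf (G t) x x) by apply: bm_qf.
  have hz := ae_zero_of_Rint0 (measurable_itv _) (bm_int bq)
    (fun t _ => ltac:(by rewrite /G qf_sumsq; apply: sumr_ge0 => i _;
       apply: sumr_ge0 => r _; exact: sqr_ge0)) hq.
  have hw i r : {ae (@lebesgue_measure R), forall t,
      `[0, S]%classic t -> (Y i t *m x) r 0 = 0}.
    pose z t := (YF i t *m x) r 0.
    pose w t := (Y i t *m x) r 0.
    have zae : {ae (@lebesgue_measure R), forall t, `[0, S]%classic t -> z t = 0}.
      apply: aeS hz => t + tS => /(_ tS).
      rewrite /G qf_sumsq => /psumr_eq0P h.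
      have := h (fun i _ => sumr_ge0 _ (fun r _ => sqr_ge0 _)) i isT.
      move=> /psumr_eq0P => /(_ (fun r _ => sqr_ge0 _) r isT) /eqP.
      by rewrite sqrf_eq0 => /eqP.
    have bz a b : 0 <= a -> bm `[a, b] z.
      by move=> a0; apply: bm_mulx => // j k; exact: bmF.
    have bw a b : 0 <= a -> bm `[a, b] w.
      by move=> a0; apply: bm_mulx => // j k; exact: bmY.
    have wint : (@lebesgue_measure R).-integrable `[0, S] (EFin \o w).
      exact: bm_int (bw 0 S (lexx 0)).
    have Weq t : 0 <= t <= S -> \int[@lebesgue_measure R]_(s in `[0, t]) w s = z t.
      move=> /andP[t0' tS'].
      have zt0 : \int[@lebesgue_measure R]_(s in `[0, t]) z s = 0.
        apply: Rint_ae0 => //; first exact: (bz 0 t (lexx 0)).1.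
        apply: aeS zae => u + uS => /(_ _); apply.
        by move: uS; rewrite /= !in_itv/= => /andP[-> ut]; rewrite (le_trans ut).
      have hfk k : (@lebesgue_measure R).-integrable `[0, t]
          (EFin \o (fun s => - beta * YF i s r k + Y i s r k)).
        by apply: intD => //; [apply: intZ => //; exact: Fint|exact: Yint].
      have e1 : z t = \int[@lebesgue_measure R]_(s in `[0, t]) (- beta * z s + w s).
        rewrite /z mxE.
        transitivity (\sum_k (\int[@lebesgue_measure R]_(s in `[0, t])
            (- beta * YF i s r k + Y i s r k)) * x k 0).
          by apply: eq_bigr => k _; rewrite (Feq _ _ _ _ t0').
        transitivity (\sum_k (\int[@lebesgue_measure R]_(s in `[0, t])
            ((- beta * YF i s r k + Y i s r k) * x k 0))).
          by apply: eq_bigr => k _; rewrite RintegralZr.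
        rewrite -Rint_sum//; last first.
          move=> k; apply: eq_integrable (intZ (x k 0) _ (hfk k)) => // s _ /=.
          by rewrite mulrC.
        apply: eq_Rintegral => s _; rewrite /w !mxE.
        rewrite mulr_sumr -big_split /=; apply: eq_bigr => k _; ring.
      rewrite e1 RintegralD//; last first.
        - exact: bm_int (bw 0 t (lexx 0)).
        - apply: intZ => //; exact: bm_int (bz 0 t (lexx 0)).
      by rewrite RintegralZl ?zt0 ?mulr0 ?add0r//; exact: bm_int (bz 0 t (lexx 0)).
    have Wae : {ae (@lebesgue_measure R), forall t, `[0, S]%classic t ->
        \int[@lebesgue_measure R]_(s in `[0, t]) w s = 0}.
      apply: aeS zae => t + tS => /(_ tS) zt0; rewrite Weq ?zt0//.
    have := ae_zero_of_int S0 wint (fun t tS => cont_ae_zero S0 wint Wae tS).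
    exact.
  have h1 i : {ae (@lebesgue_measure R), forall t, forall r : 'I_m,
      `[0, S]%classic t -> (Y i t *m x) r 0 = 0}.
    have := (@filter_forall _ 'I_m (fun r t => `[0, S]%classic t -> (Y i t *m x) r 0 = 0)
      (almost_everywhere (@lebesgue_measure R)) (ae_filter_ringOfSetsType (@lebesgue_measure R)) (hw i)).
    exact.
  have h2 := (@filter_forall _ 'I_n (fun i t => forall r : 'I_m,
      `[0, S]%classic t -> (Y i t *m x) r 0 = 0)
      (almost_everywhere (@lebesgue_measure R)) (ae_filter_ringOfSetsType (@lebesgue_measure R)) h1).
  have hP : qf (mx_integral t0 S GY) x x = 0.
    rewrite quad_int; last by move=> j k; exact: bm_int (bGY j k).
    apply: Rint_ae0 => //; first exact: (bm_qf x (measurable_itv _) bGY).1.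
    apply: aeS h2 => t h tS.
    have tS' : `[0, S]%classic t.
      by move: tS; rewrite /= !in_itv/= => /andP[tt ->]; rewrite (le_trans t00 tt).
    rewrite /GY qf_sumsq; apply: big1 => i _; apply: big1 => r _.
    by rewrite (h i r tS') expr0n.
  have := hexc x; rewrite loew_qf.
  rewrite (_ : qf _ x x = 0); last exact: hP.
  rewrite sub0r oppr_ge0 pmulr_rle0// => hn.
  apply: nrm2_eq0; apply/eqP; rewrite eq_le hn nrm2_ge0.
  by [].
have [g g0 hg] := pd_uniform QT Qpsd Qdef.
exists S, g, 0; split => //; split => //; split => //.
rewrite add0r => x; rewrite loew_qf subr_ge0; exact: hg.
Qed.
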